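(* Let $G$ be a graph on $n\ge 3$ vertices, and let $f:\binom{V(G)}{2}\to\mathbb{Z}_{\ge 0}$ be such that for all distinct $u,v\in V(G)$, there are $f(u,v)$ disjoint super-paths in $G$ connecting $u$ and $v$. (a) Then $e(G)\ge\left\lceil\frac{w(f)}{n-2}\right\rceil$. (b) Suppose that $e(G)\ge 1$ and $e(G)=\left\lceil\frac{w(f)}{n-2}\right\rceil$. Then $\Delta(G)-\delta(G)\le 1$, and one of the following holds: (i) $G$ is regular and $\Delta(G)=\delta(G)\ge 2$; (ii) $G$ has exactly one vertex of degree $\delta(G)$, and $\Delta(G)\ge 3$, $\delta(G)\ge 2$; (iii) $G$ has exactly one vertex of degree $\Delta(G)$, and $\Delta(G)\ge 4$, $\delta(G)\ge 3$. Moreover, \[ e(G)=\left\lceil\frac{w(f)}{n-2}\right\rceil=\left\lceil\frac{w(m_G)}{n-2}\right\rceil=\frac{w(m_G)+s}{n-2}, \] where $s=0$ if $G$ is regular, and $s=\frac{n-1}{2}$ otherwise.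
   Context: All graphs are finite, simple and undirected; $\delta(G)$, $\Delta(G)$ are the minimum and maximum degree. A super-path is a path of length at least two. Paths are called disjoint if they are internally vertex-disjoint. For $f:\binom{V(G)}{2}\to\mathbb{Z}_{\ge 0}$ write $f(u,v)=f(\{u,v\})$ and $w(f)=\sum_{\{u,v\}\in\binom{V(G)}{2}} f(u,v)$. Define $m_G:\binom{V(G)}{2}\to\mathbb{Z}_{\ge0}$ by $m_G(u,v)=\min(\deg_G(u),\deg_G(v))-1$ if $uv\in E(G)$, and $m_G(u,v)=\min(\deg_G(u),\deg_G(v))$ if $uv\notin E(G)$. *)

(* Defs.v *)
From mathcomp Require Import all_boot.
Set Implicit Arguments. Unset Strict Implicit. Unset Printing Implicit Defensive.

(* A finite simple graph: vertex type T (finType), adjacency e : rel T,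
   symmetric and irreflexive (assumed as hypotheses in the theorem). *)
Section Graph.
Variables (T : finType) (e : rel T).

Definition deg (x : T) : nat := #|[set y | e x y]|.
Definition maxdeg : nat := \max_(x : T) deg x.
Definition mindeg : nat := \big[minn/#|T|]_(x : T) deg x.

Definition edges : {set {set T}} :=
  [set s : {set T} | [exists x, exists y, e x y && (s == [set x; y])]].
Definition nedges : nat := #|edges|.

(* A super-path from u to v with interior vertex sequence p:
   u, p_1, ..., p_k, v is a path of the graph with distinct vertices and
   length k+1 >= 2. *)
Definition superpath (u v : T) (p : seq T) : bool :=
  [&& p != [::], path e u (rcons p v) & uniq (u :: rcons p v)].

Definition disjoint_superpaths (u v : T) (ps : seq (seq T)) : bool :=
  all (superpath u v) ps &&
  pairwise (fun p q => all (fun x => x \notin q) p) ps.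

(* functions on binom(V,2) are functions on {set T}, only evaluated on 2-sets *)
Definition weight (f : {set T} -> nat) : nat :=
  \sum_(s : {set T} | #|s| == 2) f s.

Definition mG (s : {set T}) : nat :=
  (\big[minn/#|T|]_(x in s) deg x) - (s \in edges).

Definition regular : bool := maxdeg == mindeg.

End Graph.

Definition ceil_div (a b : nat) : nat := (a + b.-1) %/ b.

(* Main.v *)
Require Import Defs.
Require Import Defs.
From mathcomp Require Import all_boot.
From HB Require Import structures.
From mathcomp Require Import zify.
Set Implicit Arguments. Unset Strict Implicit. Unset Printing Implicit Defensive.

HB.instance Definition _ := SemiGroup.isComLaw.Build nat minn minnA minnC.

Section Comb.
Variables (T : finType) (d : T -> nat).

Lemma sumc (P : pred T) c : \sum_(u | P u) c = #|[set u | P u]| * c.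
Proof. by rewrite -sum_nat_const; apply: eq_bigl => u; rewrite inE. Qed.

Lemma sumb (P : pred T) : \sum_v (P v : nat) = #|[set v | P v]|.
Proof. by rewrite -sum1dep_card [RHS]big_mkcond /=; apply: eq_bigr => v _; case: (P v). Qed.

Lemma cardC' (P : pred T) : #|[set v | ~~ P v]| = #|T| - #|[set v | P v]|.
Proof.
have := cardsC [set v | P v].
rewrite (_ : ~: _ = [set v | ~~ P v]); last by apply/setP => v; rewrite !inE.
lia.
Qed.

Definition h u v := (d u - d v) + (d v - d u).
Definition AA := \sum_u \sum_v h u v.

Lemma card_rest (x0 x1 : T) : x0 != x1 ->
  #|[set u | (u != x0) && (u != x1)]| = #|T| - 2.
Proof.
move=> x01.
have := cardsD1 x0 [set: T]; have := cardsD1 x1 ([set: T] :\ x0).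
rewrite !inE eq_sym x01 cardsT /=.
rewrite (_ : [set: T] :\ x0 :\ x1 = [set u | (u != x0) && (u != x1)]); last first.
  by apply/setP => u; rewrite !inE andbT andbC.
lia.
Qed.

Lemma AA_lb x0 x1 m M : d x0 = m -> d x1 = M -> (forall x, m <= d x <= M) -> x0 != x1 ->
  2 * (#|T| - 1) * (M - m) <= AA.
Proof.
move=> h0 h1 hb x01.
pose row u := \sum_v h u v.
have E : AA = (row x0 + row x1) + \sum_(u | (u != x0) && (u != x1)) row u.
  rewrite /AA (bigD1 x0) //= [X in _ + X](bigD1 x1) /=; last by rewrite eq_sym.
  by rewrite addnA; congr (_ + _); apply: eq_bigl => u; rewrite andbC.
have H1 : #|T| * (M - m) <= row x0 + row x1.
  rewrite /row -big_split /= -sum_nat_const; apply: leq_sum => v _.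
  have := hb v; rewrite /h h0 h1; lia.
have H2 : (#|T| - 2) * (M - m) <= \sum_(u | (u != x0) && (u != x1)) row u.
  rewrite -(card_rest x01) -sumc; apply: leq_sum => u /andP[u0 u1].
  rewrite /row (bigD1 x0) //= (bigD1 x1) /=; last by rewrite eq_sym.
  have := hb u; rewrite /h h0 h1; lia.
rewrite E.
have hT : 2 <= #|T|.
  have := cards2 x0 x1; rewrite x01 => <-; exact: max_card.
nia.
Qed.

Lemma AA_two m : (forall x, d x = m \/ d x = m.+1) ->
  AA = 2 * #|[set x | d x == m]| * (#|T| - #|[set x | d x == m]|).
Proof.
move=> hd; rewrite /AA (bigID (fun u => d u == m)) /=.
rewrite (eq_bigr (fun _ => #|T| - #|[set x | d x == m]|)); last first.
  move=> u /eqP du; rewrite -(cardC' (fun x => d x == m)) -sumb.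
  by apply: eq_bigr => v _; rewrite /h du; case: (hd v) => ->; rewrite ?eqxx //= ?eqSS; lia.
rewrite [X in _ + X](eq_bigr (fun _ => #|[set x | d x == m]|)); last first.
  move=> u du; rewrite -sumb; apply: eq_bigr => v _.
  rewrite /h; case: (hd u) du => ->; first by rewrite eqxx.
  move=> _.
  case: (hd v) => ->; rewrite ?eqxx //=; lia.
rewrite !sumc (cardC' (fun x => d x == m)) /=. set k := #|[set x | d x == m]|. by rewrite [in X in _ + X]mulnC addnn -mul2n mulnA.
Qed.
End Comb.

Section G.
Variables (T : finType) (e : rel T).
Hypotheses (e_sym : symmetric e) (e_irr : irreflexive e).

Lemma deg_lt x : deg e x < #|T|.
Proof.
rewrite /deg -cardsT; apply: proper_card; rewrite properEneq subsetT andbT.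
apply/eqP => H. have : x \in [set y | e x y] by rewrite H inE.
by rewrite inE e_irr.
Qed.

Lemma deg_gt0 x y : e x y -> 0 < deg e x.
Proof. by move=> h; apply/card_gt0P; exists y; rewrite inE. Qed.

Lemma deg2 x a b : e x a -> e x b -> a != b -> 1 < deg e x.
Proof.
move=> ha hb ab; rewrite /deg; apply: (@leq_trans #|[set a; b]|); first by rewrite cards2 ab.
by apply: subset_leq_card; apply/subsetP => z; rewrite !inE => /orP[]/eqP->.
Qed.

Lemma head_bound u v ps : u != v -> disjoint_superpaths e u v ps ->
  size ps <= #|[set x | e u x && (x != v) && (1 < deg e x)]|.
Proof.
move=> uv /andP[Hall Hpw].
rewrite -(size_map (head u)) cardE; apply: uniq_leq_size.
  elim: ps Hall Hpw => [//|p ps IH] /= /andP[Hp Hall] /andP[Hp1 Hpw].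
  rewrite IH // andbT; apply/mapP => -[q qin hq].
  move: Hp => /and3P[]; case: p Hp1 hq => [//|x p'] /= Hp1 hq _ _ _.
  have := allP Hp1 q qin; rewrite /= => /andP[+ _].
  case: q qin hq => [|y q] qin /= hq; first by move: (allP Hall _ qin).
  by rewrite hq inE eqxx.
move=> x /mapP[p /(allP Hall) /and3P[]]; case: p => [//|y p'] _ /= /andP[euy hp] hu -> /=.
rewrite mem_enum inE euy /=.
have hu0 := hu. move: hu; rewrite /= !inE !negb_or => /andP[/andP[uy _]].
rewrite mem_rcons inE negb_or => /andP[/andP[yv _] _].
rewrite yv /=.
case Es: (rcons p' v) hp => [|z s]; first by move: (f_equal size Es); rewrite size_rcons.
move=> /= /andP[eyz _].
apply: (@deg2 y u z) => //; first by rewrite e_sym.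
apply/eqP => uz; move: hu0.
by rewrite Es uz !inE eqxx orbT.
Qed.

Lemma Bd_le u v : #|[set x | e u x && (x != v) && (1 < deg e x)]| <= deg e u - e u v.
Proof.
rewrite /deg (cardsD1 v [set y | e u y]) inE addKn.
by apply: subset_leq_card; apply/subsetP => z; rewrite !inE => /andP[/andP[-> ->] _].
Qed.

Lemma in_edges2 u v : ([set u; v] \in edges e) = e u v.
Proof.
rewrite /edges inE; apply/existsP/idP => [[x /existsP[y /andP[exy /eqP H]]]|euv].
  have : x \in [set u; v] by rewrite H !inE eqxx.
  have : y \in [set u; v] by rewrite H !inE eqxx orbT.
  rewrite !inE => /orP[]/eqP hy /orP[]/eqP hx; subst x y;
    move: exy; rewrite ?e_irr // => h; by rewrite e_sym.
by exists u; apply/existsP; exists v; rewrite euv eqxx.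
Qed.

Lemma mG2 u v : u != v -> mG e [set u; v] = minn (deg e u) (deg e v) - e u v.
Proof.
move=> uv; rewrite /mG in_edges2 (bigD1 u) ?inE ?eqxx //= (bigD1 v) ?inE ?eqxx ?orbT 1?eq_sym //=.
rewrite big_pred0; last by move=> x; rewrite !inE; case: (x == u); case: (x == v).
by rewrite (minn_idPl (ltnW (deg_lt v))).
Qed.

Lemma deg_sum u : deg e u = \sum_v (e u v : nat).
Proof. by rewrite /deg -sum1dep_card big_mkcond. Qed.

Lemma set2_eq (x y a b : T) : x != y ->
  ([set x; y] == [set a; b]) = ((x == a) && (y == b)) || ((x == b) && (y == a)).
Proof.
move=> xy; apply/eqP/orP => [H|[/andP[/eqP-> /eqP->]|/andP[/eqP-> /eqP->]]];
  [ | by [] | by rewrite setUC].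
have : x \in [set a; b] by rewrite -H !inE eqxx.
have : y \in [set a; b] by rewrite -H !inE eqxx orbT.
rewrite !inE => /orP[]/eqP hy /orP[]/eqP hx; subst x y; rewrite ?eqxx in xy *;
  by [left | right].
Qed.

Lemma W2 (F : {set T} -> nat) :
  \sum_u \sum_(v | v != u) F [set u; v] = 2 * weight F.
Proof.
rewrite pair_big_dep /=.
rewrite (partition_big (fun q : T * T => [set q.1; q.2]) (fun s : {set T} => #|s| == 2)); last first.
  by case=> x y /= yx; rewrite cards2 (eq_sym x) yx.
rewrite /weight big_distrr /=; apply: eq_bigr => s /cards2P[a [b [ab ->]]].
rewrite (eq_bigr (fun _ => F [set a; b])); last by move=> q /andP[_ /eqP->].
rewrite (eq_bigl (fun q => q \in [set (a, b); (b, a)])); last first.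
  case=> x y /=; rewrite !inE /=.
  case: (y =P x) => [->|/eqP yx] /=.
    by rewrite !xpair_eqE; apply/esym/negbTE; apply/negP => /orP[]/andP[/eqP-> /eqP bx];
      rewrite bx eqxx in ab.
  by rewrite set2_eq ?xpair_eqE // eq_sym.
rewrite sum_nat_const cards2 mulnC.
have -> : ((a, b) != (b, a)) by rewrite xpair_eqE negb_and ab.
by rewrite mulnC.
Qed.

Lemma handshake : \sum_u deg e u = 2 * nedges e.
Proof.
rewrite /nedges.
have -> : #|edges e| = weight (fun s => (s \in edges e : nat)).
  rewrite /weight (bigID (fun s => s \in edges e)) /= [X in _ + X]big1; last first.
    by move=> s /andP[_ /negbTE ->].
  rewrite addn0 (eq_bigr (fun _ => 1)); last by move=> s /andP[_ ->].
  rewrite sum1dep_card; apply: eq_card => s.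
  rewrite [in RHS]inE andbC; case H: (s \in edges e) => //=; symmetry.
  move: H; rewrite /edges inE => /existsP[x /existsP[y /andP[exy /eqP ->]]].
  by rewrite cards2; case: (x =P y) exy => [->|//]; rewrite e_irr.
rewrite -W2; apply: eq_bigr => u _; rewrite deg_sum (bigD1 u) //= e_irr add0n.
by apply: eq_bigr => v vu; rewrite in_edges2.
Qed.

Lemma mindeg_le x : mindeg e <= deg e x.
Proof. by rewrite /mindeg (bigD1 x) //= geq_minl. Qed.

Lemma mindeg_ex : #|T| > 0 -> exists x, mindeg e = deg e x.
Proof.
move=> /card_gt0P[x0 _].
have : (mindeg e == #|T|) || [exists x, mindeg e == deg e x].
  rewrite /mindeg; apply: (big_ind (fun r => (r == #|T|) || [exists x, r == deg e x])).
  - by rewrite eqxx.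
  - move=> a b /orP[/eqP->|/existsP[x /eqP->]] /orP[/eqP->|/existsP[y /eqP->]];
    rewrite /minn; case: ltnP => _; rewrite ?eqxx //; apply/orP; right; apply/existsP;
    by [exists x | exists y].
  - by move=> x _; apply/orP; right; apply/existsP; exists x.
case/orP=> [/eqP H|/existsP[x /eqP H]]; last by exists x.
by have := mindeg_le x0; rewrite H leqNgt deg_lt.
Qed.

Lemma maxdeg_ge x : deg e x <= maxdeg e.
Proof. exact: leq_bigmax. Qed.

Lemma maxdeg_ex : #|T| > 0 -> exists x, maxdeg e = deg e x.
Proof. by move=> /(eq_bigmax (deg e))[x H]; exists x. Qed.


Lemma sum_const_T c : \sum_(v : T) c = #|T| * c.
Proof. by rewrite sum_nat_const. Qed.

Lemma identity : 2 <= #|T| ->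
  4 * weight (mG e) + AA (deg e) = 4 * ((#|T| - 2) * nedges e).
Proof.
move=> n2.
set d := deg e.
have S1 : \sum_u \sum_v (minn (d u) (d v) - e u v) = 2 * weight (mG e) + \sum_u d u.
  rewrite -W2 -big_split; apply: eq_bigr => u _ /=; rewrite (bigD1 u) //= minnn e_irr subn0 addnC.
  by congr (_ + _); apply: eq_bigr => v vu; rewrite mG2 // eq_sym.
have P : \sum_u \sum_v (2 * (minn (d u) (d v) - e u v) + h d u v + 2 * e u v)
       = \sum_u \sum_v (d u + d v).
  apply: eq_bigr => u _; apply: eq_bigr => v _.
  have : e u v -> 0 < d u /\ 0 < d v.
    by move=> huv; split; [apply: (deg_gt0 huv) | apply: (@deg_gt0 v u); rewrite e_sym].
  rewrite /h; case: (e u v) => /= H; [have := H isT|]; lia.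
have L : \sum_u \sum_v (2 * (minn (d u) (d v) - e u v) + h d u v + 2 * e u v)
       = 2 * (\sum_u \sum_v (minn (d u) (d v) - e u v)) + AA d + 2 * \sum_u d u.
  rewrite /AA big_distrr -!big_split /= big_distrr /= -big_split /=; apply: eq_bigr => u _.
  rewrite /d; have -> : 2 * deg e u = 2 * \sum_v (e u v : nat) by rewrite -deg_sum.
  rewrite !big_distrr -!big_split /=.
  by apply: eq_bigr => v _.
have R : \sum_u \sum_v (d u + d v) = #|T| * \sum_u d u + #|T| * \sum_u d u.
  rewrite (eq_bigr (fun u => #|T| * d u + \sum_v d v)); last first.
    by move=> u _; rewrite big_split /= sum_const_T.
  by rewrite big_split /= -big_distrr /= sum_const_T.
have hs := handshake.
rewrite -/d in hs.
move: P; rewrite L R S1 hs.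
set M := weight (mG e); set E := nedges e; set A := AA d.
nia.
Qed.

Variable f : {set T} -> nat.
Hypothesis hf : forall u v : T, u != v ->
      exists ps : seq (seq T),
        size ps = f [set u; v] /\ disjoint_superpaths e u v ps.

Definition Bset u v := [set x | e u x && (x != v) && (1 < deg e x)].

Lemma fB u v : u != v -> f [set u; v] <= #|Bset u v|.
Proof. by move=> uv; have [ps [<- H]] := hf uv; exact: head_bound. Qed.

Lemma fB' u v : u != v -> f [set u; v] <= #|Bset v u|.
Proof. by move=> uv; rewrite setUC; apply: fB; rewrite eq_sym. Qed.

Lemma f_mG (s : {set T}) : #|s| == 2 -> f s <= mG e s.
Proof.
move=> /cards2P[a [b [ab ->]]]; rewrite mG2 //.
have h1 := leq_trans (fB ab) (Bd_le a b).
have h2 := leq_trans (fB' ab) (Bd_le b a).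
rewrite (e_sym b a) in h2.
have : e a b -> 0 < deg e a /\ 0 < deg e b.
  by move=> hab; split; [apply: (deg_gt0 hab) | apply: (@deg_gt0 b a); rewrite e_sym].
case: (e a b) h1 h2 => /= h1 h2 H; [have := H isT|]; lia.
Qed.

Lemma W_le : weight f <= weight (mG e).
Proof. by apply: leq_sum => s; exact: f_mG. Qed.

Lemma low_deg : (forall x, deg e x <= 1) -> weight f = 0.
Proof.
move=> hd; apply: big1 => s /cards2P[a [b [ab ->]]].
apply/eqP; rewrite -leqn0; apply: leq_trans (fB ab) _.
rewrite leqn0 cards_eq0; apply/eqP/setP => x; rewrite !inE.
by have := hd x; case: (deg e x) => [|[|]]; rewrite ?andbF.
Qed.

Lemma one_deg2 c : (forall x, 1 < deg e x -> x = c) -> deg e c = 2 -> weight f <= 1.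
Proof.
move=> hc dc.
have H : forall s : {set T}, #|s| == 2 -> f s <= (s == [set y | e c y]).
  move=> s /cards2P[a [b [ab ->]]].
  have B1 : forall u v, #|Bset u v| <= 1.
    move=> u v; rewrite -(cards1 c); apply: subset_leq_card; apply/subsetP => x.
    by rewrite !inE => /andP[_ /hc ->].
  have B2 : forall u v, 0 < #|Bset u v| -> e u c.
    by move=> u v /card_gt0P[x]; rewrite !inE => /andP[/andP[eux _] /hc <-].
  have ha := fB ab; have hb := fB' ab.
  case: (posnP (f [set a; b])) => [->//|fpos].
  have eac := B2 _ _ (leq_trans fpos ha).
  have ebc := B2 _ _ (leq_trans fpos hb).
  have -> : [set a; b] == [set y | e c y].
    rewrite eqEcard; apply/andP; split.
      by apply/subsetP => x; rewrite !inE => /orP[]/eqP->; rewrite e_sym.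
    by rewrite -/(deg e c) dc cards2 ab.
  by have := B1 a b; lia.
rewrite /weight; apply: (@leq_trans (\sum_(s : {set T} | #|s| == 2) (s == [set y | e c y] : nat))).
  by apply: leq_sum.
apply: (@leq_trans (\sum_(s : {set T}) (s == [set y | e c y] : nat))).
  by rewrite [X in _ <= X](bigID (fun s : {set T} => #|s| == 2)) /= leq_addr.
by rewrite sumb (_ : [set s | s == _] = [set [set y | e c y]]) ?cards1 //; apply/setP => s; rewrite !inE.
Qed.

End G.

Set Implicit Arguments. Unset Implicit Arguments.
Theorem lemma2p11 (T : finType) (e : rel T)
  (e_sym : symmetric e) (e_irr : irreflexive e)
  (n_ge3 : 3 <= #|T|) (f : {set T} -> nat)
  (hf : forall u v : T, u != v ->
      exists ps : seq (seq T),
        size ps = f [set u; v] /\ disjoint_superpaths e u v ps) :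
  (* (a) *)
  ceil_div (weight f) (#|T| - 2) <= nedges e /\
  (* (b) *)
  (1 <= nedges e -> nedges e = ceil_div (weight f) (#|T| - 2) ->
     [/\ maxdeg e - mindeg e <= 1,
         [\/ regular e /\ 2 <= mindeg e,
             [/\ #|[set x | deg e x == mindeg e]| = 1, 3 <= maxdeg e & 2 <= mindeg e]
           | [/\ #|[set x | deg e x == maxdeg e]| = 1, 4 <= maxdeg e & 3 <= mindeg e]],
         nedges e = ceil_div (weight (mG e)) (#|T| - 2) &
         (* e(G) = (w(m_G) + s)/(n-2), s = 0 if regular, (n-1)/2 otherwise;
            stated with denominators cleared *)
         2 * (#|T| - 2) * nedges e =
           2 * weight (mG e) + (if regular e then 0 else #|T| - 1)]).
Proof.
have n2 : 2 <= #|T| by lia.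
have n0 : 0 < #|T| by lia.
have Hid := identity e_sym e_irr n2.
have WM := W_le e_sym e_irr hf.
have ceil_le : forall X, X <= (#|T| - 2) * nedges e -> ceil_div X (#|T| - 2) <= nedges e.
  move=> X hX; rewrite /ceil_div -ltnS ltn_divLR; last by lia.
  rewrite mulSn mulnC; lia.
have ceil0 : ceil_div 0 (#|T| - 2) = 0 by rewrite /ceil_div add0n divn_small //; lia.
have ceil1 : ceil_div 1 (#|T| - 2) = 1.
  by rewrite /ceil_div (_ : 1 + (#|T| - 2).-1 = #|T| - 2) ?divnn; lia.
split; first by apply: ceil_le; lia.
move=> E1 Eeq.
have Hle : nedges e * (#|T| - 2) <= weight f + (#|T| - 2).-1.
  by rewrite {1}Eeq; apply: leq_divM.
have Aub : AA (deg e) <= 4 * (#|T| - 3) by nia.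
have ceilM : nedges e = ceil_div (weight (mG e)) (#|T| - 2).
  apply/eqP; rewrite eqn_leq; apply/andP; split; last by apply: ceil_le; lia.
  by rewrite {1}Eeq; apply: leq_div2r; lia.
have [x0 hx0] := mindeg_ex e_irr n0.
have [x1 hx1] := maxdeg_ex e n0.
have hb : forall x, mindeg e <= deg e x <= maxdeg e.
  by move=> x; rewrite mindeg_le ?maxdeg_ge.
have lowc : ~ (forall x, deg e x <= 1).
  by move=> H; move: Eeq; rewrite (low_deg e_sym hf H) ceil0; lia.
case: (boolP (regular e)) => reg.
  have Mm : maxdeg e = mindeg e by apply/eqP.
  have A0 : AA (deg e) = 0.
    apply: big1 => u _; apply: big1 => v _; rewrite /h.
    by have := hb u; have := hb v; rewrite Mm; lia.
  split => //; first by lia.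
    apply: Or31; split => //.
    case: (leqP 2 (mindeg e)) => // hm; exfalso; apply: lowc => x.
    by have := hb x; lia.
  by lia.
have mM : mindeg e < maxdeg e.
  by rewrite ltn_neqAle eq_sym reg /=; have := hb x0; lia.
have x01 : x0 != x1 by apply/eqP => H; move: hx0 hx1 mM; rewrite H; lia.
have Alb := AA_lb (esym hx0) (esym hx1) hb x01.
have M1 : maxdeg e = (mindeg e).+1 by nia.
have hd : forall x, deg e x = mindeg e \/ deg e x = (mindeg e).+1.
  by move=> x; have := hb x; lia.
have A2 := AA_two hd.
set k := #|[set x | deg e x == mindeg e]| in A2.
have k1 : 0 < k by apply/card_gt0P; exists x0; rewrite inE hx0.
have k2 : #|[set x | ~~ (deg e x == mindeg e)]| = #|T| - k := cardC' (fun x => deg e x == mindeg e).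
have k3 : 0 < #|T| - k.
  by rewrite -k2; apply/card_gt0P; exists x1; rewrite inE -hx1 M1; lia.
have hk : k = 1 \/ k = #|T| - 1 by nia.
have Aval : AA (deg e) = 2 * (#|T| - 1) by move: A2; case: hk => ->; nia.
have hs := handshake e_sym e_irr.
have Sum : \sum_u deg e u + k = #|T| * maxdeg e.
  rewrite /k -sumb -big_split /= -sum_const_T; apply: eq_bigr => u _.
  case: (hd u) => ->; rewrite ?eqxx ?M1 //=; first by rewrite addn1.
  by rewrite (_ : ((mindeg e).+1 == mindeg e) = false) ?addn0 //; lia.
have Mpos : 2 <= maxdeg e.
  case: (leqP 2 (maxdeg e)) => // hM; exfalso; apply: lowc => x; have := hb x; lia.
split; first by lia.
- case: hk => hk.
  + apply: Or32.
    have M3 : 3 <= maxdeg e.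
      case: (leqP 3 (maxdeg e)) => // hM.
      have hM2 : maxdeg e = 2 by lia.
      by rewrite hs hk hM2 in Sum; lia.
    split => //; lia.
  + have S1 : #|[set x | deg e x == maxdeg e]| = 1.
      rewrite (_ : [set x | deg e x == maxdeg e] = [set x | ~~ (deg e x == mindeg e)]).
        by rewrite k2 hk; lia.
      by apply/setP => x; rewrite !inE M1; case: (hd x) => ->; rewrite ?eqxx; lia.
    apply: Or33.
    have M4 : 4 <= maxdeg e.
      case: (leqP 4 (maxdeg e)) => // hM.
      exfalso.
      have [hM2|hM3] : maxdeg e = 2 \/ maxdeg e = 3 by lia.
      * have W1 : weight f <= 1.
          apply: (one_deg2 e_sym hf (c := x1)); last by rewrite -hx1.
          move=> x hx; move/eqP: S1 => /cards1P[c Sc].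
          have : x \in [set x | deg e x == maxdeg e] by rewrite inE; have := hb x; lia.
          have : x1 \in [set x | deg e x == maxdeg e] by rewrite inE hx1.
          by rewrite Sc !inE => /eqP-> /eqP->.
        have : nedges e <= 1.
          rewrite Eeq; apply: (@leq_trans (ceil_div 1 (#|T| - 2))); last by rewrite ceil1.
          by rewrite /ceil_div; apply: leq_div2r; lia.
        rewrite hk hM2 hs in Sum; lia.
      * rewrite hk hM3 hs in Sum; lia.
    split => //; lia.
- done.
- by rewrite -mulnA; lia.
Qed.
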